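(* Let $n\ge1$ and let $\mathfrak h_{2n+2}$ be the real Lie algebra with basis $X^1,\dots,X^{2n+2}$ whose only nonzero brackets are $[X^i,X^{n+1}]=X^{n+1+i}$ for $1\le i\le n$, with dual basis $\alpha_1,\dots,\alpha_{2n+2}$, so that $d\alpha_i=0$ for $1\le i\le n+1$ and $i=2n+2$, and $d\alpha_{n+1+i}=\alpha_{n+1}\wedge\alpha_i$ for $1\le i\le n$. Let $g=\sum_i\alpha_i\otimes\alpha_i$ (so $X^1,\dots,X^{2n+2}$ is orthonormal) and let $J$ be an endomorphism of $\mathfrak h_{2n+2}$ with $J^2=-\mathrm{Id}$ and $g(JX,JY)=g(X,Y)$. Write $JX^i=\sum_{j}a^i_jX^j$ and let $\mathcal J$ be the $(2n+2)\times(2n+2)$ matrix whose $(i,j)$ entry is $a^i_j$ (it is orthogonal and antisymmetric). Let $F=\frac12\sum_{i,j}a^i_j\,\alpha_i\wedge\alpha_j$ be the Kähler form, viewed as a left-invariant 2-form on the corresponding simply connected Lie group. Then $dF=0$ if and only if $$\mathcal J=\begin{pmatrix} O & A\\ -{}^tA & O\end{pmatrix}$$ with $O$ the $(n+1)\times(n+1)$ zero matrix and $A$ an orthogonal $(n+1)\times(n+1)$ matrix whose upper-left $n\times n$ block $B$ (entries $a^i_{n+1+j}$, $1\le i,j\le n$) is symmetric.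
   Context: Here $d$ is the exterior derivative of left-invariant forms, determined by $d\alpha(X,Y)=-\alpha([X,Y])$ for left-invariant 1-forms, equivalently by the stated structure equations. *)

(* Defs.v *)
From HB Require Import structures.
From mathcomp Require Import all_boot all_order all_algebra.
Set Implicit Arguments. Unset Strict Implicit. Unset Printing Implicit Defensive.
Import Order.TTheory GRing.Theory Num.Theory.
Local Open Scope ring_scope.

(* Indices 0..2n+1 (0-based) of 'I_(n.+1 + n.+1) stand for X^1..X^{2n+2}:
   nat index k <-> X^{k+1}.  Thus X^i (1<=i<=n) is index i-1 < n,
   X^{n+1} is index n, X^{n+1+i} is index n+i. *)

(* Structure constants of h_{2n+2}: coefficient of X^m in [X^k, X^l].
   Only nonzero brackets: [X^i, X^{n+1}] = X^{n+1+i} (1<=i<=n), and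
   antisymmetry. *)
Definition hbr (R : nzRingType) (n : nat) (k l m : 'I_(n.+1 + n.+1)) : R :=
  if [&& (k < n)%N, (l == n :> nat) & (m == (k + n.+1)%N :> nat)] then 1
  else if [&& (l < n)%N, (k == n :> nat) & (m == (l + n.+1)%N :> nat)] then -1
  else 0.

(* (alpha_i /\ alpha_j)(X^k, X^l) *)
Definition wedge11 (R : nzRingType) (d : nat) (i j k l : 'I_d) : R :=
  ((i == k) && (j == l))%:R - ((i == l) && (j == k))%:R.

Definition kahler_form (R : fieldType) (d : nat) (a : 'M[R]_d) (k l : 'I_d) : R :=
  2^-1 * \sum_(i < d) \sum_(j < d) a i j * wedge11 R i j k l.

(* Exterior derivative of a left-invariant 2-form w (given by its values on
   basis pairs), with the convention d alpha (X,Y) = - alpha([X,Y]):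
   dw(X,Y,Z) = - w([X,Y],Z) + w([X,Z],Y) - w([Y,Z],X). *)
Definition d2form (R : nzRingType) (n : nat)
    (w : 'I_(n.+1 + n.+1) -> 'I_(n.+1 + n.+1) -> R)
    (k l m : 'I_(n.+1 + n.+1)) : R :=
  - (\sum_p hbr R k l p * w p m)
  + (\sum_p hbr R k m p * w p l)
  - (\sum_p hbr R l m p * w p k).

(* Main.v *)
Require Import Defs.
From HB Require Import structures.
From mathcomp Require Import all_boot all_order all_algebra.
From mathcomp Require Import zify ring lra.
Set Implicit Arguments. Unset Strict Implicit. Unset Printing Implicit Defensive.
Import Order.TTheory GRing.Theory Num.Theory.
Local Open Scope ring_scope.

Definition Tf (R : realFieldType) (b : nat -> nat -> R) (n k l m : nat) : R :=
  (if (k < n)%N && (l == n) then b (k + n.+1)%N m else 0)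
  - (if (l < n)%N && (k == n) then b (l + n.+1)%N m else 0).
Definition Df (R : realFieldType) (b : nat -> nat -> R) (n k l m : nat) : R :=
  - Tf b n k l m + Tf b n k m l - Tf b n l m k.

Lemma key (R : realFieldType) (b : nat -> nat -> R) (n k l m : nat)
  (C1 : forall i c, (i < n)%N -> (n < c)%N -> (c < n.+1 + n.+1)%N -> b (i + n.+1)%N c = 0)
  (C2 : forall i j, (i < n)%N -> (j < n)%N -> b (i + n.+1)%N j = b (j + n.+1)%N i)
  (hk : (k < n.+1 + n.+1)%N) (hl : (l < n.+1 + n.+1)%N) (hm : (m < n.+1 + n.+1)%N) :
  Df b n k l m = 0.
Proof.
rewrite /Df /Tf.
case: (ltngtP k n) => Hk; case: (ltngtP l n) => Hl;
case: (ltngtP m n) => Hm; rewrite /= ?eqxx ?ltnn /=;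
try rewrite Hk; try rewrite Hl; try rewrite Hm; rewrite /= ?eqxx ?ltnn /=;
try ring; try (rewrite C1 //; ring);
 try (rewrite (C2 k l) //; ring); try (rewrite (C2 k m) //; ring);
 try (rewrite (C2 l m) //; ring).
Qed.

Lemma antisym (R : realFieldType) (d : nat) (a : 'M[R]_d)
  (hJ2 : a *m a = - 1%:M) (hJg : a *m a^T = 1%:M) : a^T = - a.
Proof.
by rewrite -[a^T]mul1mx -[1%:M]opprK -hJ2 mulNmx -mulmxA hJg mulmx1.
Qed.

Lemma sum_delta2 (R : realFieldType) (d : nat) (a : 'M[R]_d) (k l : 'I_d) :
  \sum_(i < d) \sum_(j < d) a i j * ((i == k) && (j == l))%:R = a k l.
Proof.
rewrite (bigD1 k) //= [X in _ + X]big1 ?addr0; last first.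
  move=> i Hi; apply: big1 => j _; by rewrite (negbTE Hi) mulr0.
rewrite (bigD1 l) //= [X in _ + X]big1 ?addr0 ?eqxx ?mulr1 //.
by move=> j Hj; rewrite (negbTE Hj) andbF mulr0.
Qed.

Lemma kahlerE (R : realFieldType) (d : nat) (a : 'M[R]_d) (ha : a^T = - a)
  (k l : 'I_d) : kahler_form a k l = a k l.
Proof.
rewrite /kahler_form /wedge11.
under eq_bigr do under eq_bigr do rewrite mulrBr.
under eq_bigr do rewrite sumrB.
rewrite sumrB sum_delta2.
have -> : \sum_(i < d) \sum_(j < d) a i j * ((i == l) && (j == k))%:R = a l k.
  by rewrite sum_delta2.
have -> : a l k = - a k l by have := congr1 (fun M : 'M[R]_d => M k l) ha; rewrite !mxE.
have h2 : (2 : R) != 0 by rewrite pnatr_eq0.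
by field.
Qed.

Definition x0 (n : nat) : 'I_(n.+1 + n.+1) := lshift n.+1 (@ord0 n).
Definition ordn (n x : nat) : 'I_(n.+1 + n.+1) := insubd (x0 n) x.

Lemma ordK (n x : nat) : (x < n.+1 + n.+1)%N -> val (ordn n x) = x.
Proof. by move=> h; rewrite /ordn insubdK. Qed.

Lemma sum_hbr (R : realFieldType) (n : nat) (w : 'I_(n.+1 + n.+1) -> R)
  (k l : 'I_(n.+1 + n.+1)) :
  \sum_p hbr R k l p * w p =
  (if (k < n)%N && (l == n :> nat) then w (ordn n (k + n.+1)) else 0)
  - (if (l < n)%N && (k == n :> nat) then w (ordn n (l + n.+1)) else 0).
Proof.
rewrite /hbr.
case: (boolP ((k < n)%N && (l == n :> nat))) => H1.
  have H2 : ((l < n)%N && (k == n :> nat)) = false.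
    by move: H1 => /andP[_ /eqP->]; rewrite ltnn.
  rewrite H2 subr0; case/andP: H1 => Hk Hl.
  have Hs : (k + n.+1 < n.+1 + n.+1)%N by lia.
  rewrite (bigD1 (ordn n (k + n.+1))) //= [X in _ + X]big1 ?addr0.
    by rewrite Hk Hl ordK // eqxx mul1r.
  move=> p Hp; rewrite Hk Hl /=.
  have -> : (val p == (k + n.+1)%N) = false.
    apply/negbTE; apply: contra Hp => /eqP Hp.
    by apply/eqP/val_inj; rewrite /= ordK.
  by rewrite /= (eqP Hl) ltnn mul0r.
rewrite /= sub0r.
case: (boolP ((l < n)%N && (k == n :> nat))) => H2.
  case/andP: H2 => Hl Hk.
  have Hs : (l + n.+1 < n.+1 + n.+1)%N by lia.
  rewrite (bigD1 (ordn n (l + n.+1))) //= [X in _ + X]big1 ?addr0.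
    rewrite Hl Hk ordK // eqxx (eqP Hk) ltnn /=; by rewrite mulN1r.
  move=> p Hp; rewrite Hk Hl (eqP Hk) ltnn /=.
  have -> : (val p == (l + n.+1)%N) = false.
    apply/negbTE; apply: contra Hp => /eqP Hp.
    by apply/eqP/val_inj; rewrite /= ordK.
  by rewrite mul0r.
rewrite big1 ?oppr0 // => p _.
have -> : [&& (k < n)%N, l == n :> nat & val p == (k + n.+1)%N] = false.
  by apply/negbTE; apply: contra H1 => /and3P[-> -> _].
have -> : [&& (l < n)%N, k == n :> nat & val p == (l + n.+1)%N] = false.
  by apply/negbTE; apply: contra H2 => /and3P[-> -> _].
by rewrite mul0r.
Qed.

Definition bf (R : realFieldType) (n : nat) (a : 'M[R]_(n.+1 + n.+1)) (x y : nat) : R :=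
  a (ordn n x) (ordn n y).

Lemma bfE (R : realFieldType) (n : nat) (a : 'M[R]_(n.+1 + n.+1)) (k l : 'I_(n.+1 + n.+1)) :
  bf a k l = a k l.
Proof. by rewrite /bf /ordn !valKd. Qed.

Lemma d2E (R : realFieldType) (n : nat) (a : 'M[R]_(n.+1 + n.+1)) (ha : a^T = - a)
  (k l m : 'I_(n.+1 + n.+1)) :
  d2form (kahler_form a) k l m = Df (bf a) n k l m.
Proof.
rewrite /d2form !sum_hbr !kahlerE // /Df /Tf /bf /ordn !valKd.
by [].
Qed.

Lemma mmT0 (R : realFieldType) (m : nat) (P : 'M[R]_m) : P *m P^T = 0 -> P = 0.
Proof.
move=> h; apply/matrixP => i j; rewrite mxE.
have := congr1 (fun M : 'M[R]_m => M i i) h; rewrite !mxE.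
under eq_bigr do rewrite mxE.
move/psumr_eq0P => H.
have Hn : forall k : 'I_m, true -> 0 <= P i k * P i k.
  by move=> k _; rewrite -expr2 sqr_ge0.
by have := H Hn j isT; move/eqP; rewrite mulf_eq0 orbb => /eqP.
Qed.

Lemma rshE (n : nat) (X : 'I_(n.+1 + n.+1)) : (n.+1 <= X)%N ->
  exists j : 'I_n.+1, X = rshift n.+1 j /\ val j = (X - n.+1)%N.
Proof.
move=> h; have pf : (X - n.+1 < n.+1)%N by have := ltn_ord X; lia.
exists (Ordinal pf); split => //; apply: val_inj => /=; lia.
Qed.

Lemma lshE (n : nat) (X : 'I_(n.+1 + n.+1)) : (X < n.+1)%N ->
  exists j : 'I_n.+1, X = lshift n.+1 j /\ val j = X.
Proof.
move=> h; exists (Ordinal h); split => //; exact: val_inj.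
Qed.

Lemma trN (R : realFieldType) (p q : nat) (M : 'M[R]_(p, q)) : (- M)^T = - M^T.
Proof. by apply/matrixP => i j; rewrite !mxE. Qed.

Theorem lemma3p2 (R : realFieldType) (n : nat) (hn : (0 < n)%N)
  (a : 'M[R]_(n.+1 + n.+1))
  (hJ2 : a *m a = - 1%:M) (hJg : a *m a^T = 1%:M) :
  (forall k l m, d2form (kahler_form a) k l m = 0) <->
  (exists A : 'M[R]_(n.+1),
     [/\ a = block_mx 0 A (- A^T) 0,
         A *m A^T = 1%:M &
         forall i j : 'I_n,
           A (widen_ord (leqnSn n) i) (widen_ord (leqnSn n) j)
           = A (widen_ord (leqnSn n) j) (widen_ord (leqnSn n) i)]).
Proof.
have ha := antisym hJ2 hJg.
have ent : forall x y, a x y = - a y x.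
  by move=> x y; have := congr1 (fun M : 'M[R]_(n.+1 + n.+1) => M y x) ha; rewrite !mxE.
split.
- move=> H.
  have C1 : forall i c, (i < n)%N -> (n < c)%N -> (c < n.+1 + n.+1)%N ->
      bf a (i + n.+1)%N c = 0.
    move=> i c Hi Hc Hcd.
    have := H (ordn n i) (ordn n n) (ordn n c).
    rewrite d2E // !ordK; try lia.
    rewrite /Df /Tf Hi eqxx ltnn (ltn_eqF Hi) (gtn_eqF Hc) (ltnNge c n) (ltnW Hc) /=.
    move=> h; lra.
  have C2 : forall i j, (i < n)%N -> (j < n)%N ->
      bf a (i + n.+1)%N j = bf a (j + n.+1)%N i.
    move=> i j Hi Hj.
    have := H (ordn n i) (ordn n n) (ordn n j).
    rewrite d2E // !ordK; try lia.
    rewrite /Df /Tf Hi Hj eqxx ltnn (ltn_eqF Hi) (ltn_eqF Hj) /=.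
    move=> h; lra.
  have dr : drsubmx a = 0.
    apply/matrixP => i j; rewrite !mxE.
    case: (ltnP i n) => Hi.
      rewrite -bfE /= addnC; apply: C1 => //; have := ltn_ord j; lia.
    case: (ltnP j n) => Hj.
      have -> := ent (rshift n.+1 i) (rshift n.+1 j).
      rewrite -bfE /= addnC C1 ?oppr0 //; have := ltn_ord i; lia.
    have eij : rshift n.+1 i = rshift n.+1 j :> 'I_(n.+1 + n.+1).
      apply: val_inj => /=; have := ltn_ord i; have := ltn_ord j; lia.
    rewrite eij; have := ent (rshift n.+1 j) (rshift n.+1 j); lra.
  have dl : dlsubmx a = - (ursubmx a)^T.
    by apply/matrixP => i j; rewrite !mxE ent.
  set A := ursubmx a; set P := ulsubmx a.
  have ea : a = block_mx P A (- A^T) 0 by rewrite -[a in LHS]submxK dr dl.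
  have hJg' := hJg; rewrite ea tr_block_mx mulmx_block (scalar_mx_block n.+1 n.+1) in hJg'.
  case/eq_block_mx: hJg' => h1 _ _ h4.
  move: h4; rewrite !trmx0 !mulmx0 addr0 trN trmxK mulNmx mulmxN opprK => h4.
  have hAA : A *m A^T = 1%:M by apply: mulmx1C.
  move: h1; rewrite hAA -{2}[1%:M]add0r => /addIr hP.
  have P0 : P = 0 by apply: mmT0.
  exists A; split => //; first by rewrite ea P0.
  move=> i j; rewrite !mxE ent [RHS]ent; congr (- _).
  rewrite -!bfE /= !(addnC n.+1) C2 //.
- case=> A [ea hA hB] k l m.
  rewrite d2E //; apply: key => //.
  + move=> i c Hi Hc Hcd; rewrite /bf.
    have [j1 [-> _]] := rshE (X := ordn n (i + n.+1)) (ltac:(rewrite ordK; lia)).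
    have [j2 [-> _]] := rshE (X := ordn n c) (ltac:(rewrite ordK; lia)).
    by rewrite ea block_mxEdr mxE.
  + move=> i j Hi Hj; rewrite /bf.
    have [j1 [E1 v1]] := rshE (X := ordn n (i + n.+1)) (ltac:(rewrite ordK; lia)).
    have [j2 [E2 v2]] := lshE (X := ordn n j) (ltac:(rewrite ordK; lia)).
    have [j3 [E3 v3]] := rshE (X := ordn n (j + n.+1)) (ltac:(rewrite ordK; lia)).
    have [j4 [E4 v4]] := lshE (X := ordn n i) (ltac:(rewrite ordK; lia)).
    rewrite ordK in v1; last lia. rewrite ordK in v2; last lia.
    rewrite ordK in v3; last lia. rewrite ordK in v4; last lia.
    rewrite E1 E2 E3 E4 ea !block_mxEdl !mxE; congr (- _).
    have Hi' : (i < n)%N := Hi. have Hj' : (j < n)%N := Hj.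
    have -> : j2 = widen_ord (leqnSn n) (Ordinal Hj') by apply: val_inj => /=; move: v1 v2 v3 v4 => /= v1 v2 v3 v4; lia.
    have -> : j1 = widen_ord (leqnSn n) (Ordinal Hi') by apply: val_inj => /=; move: v1 v2 v3 v4 => /= v1 v2 v3 v4; lia.
    have -> : j3 = widen_ord (leqnSn n) (Ordinal Hj') by apply: val_inj => /=; move: v1 v2 v3 v4 => /= v1 v2 v3 v4; lia.
    have -> : j4 = widen_ord (leqnSn n) (Ordinal Hi') by apply: val_inj => /=; move: v1 v2 v3 v4 => /= v1 v2 v3 v4; lia.
    by rewrite hB.
Qed.
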